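(* Let $w$ be a Robinsonian graphon satisfying Assumptions (A1)–(A4). Then the Fiedler value $\lambda_2$ of $\mathbb{L}$ does not belong to the range $\mathrm{rg}(d)=\{d(x):x\in[0,1]\}$ of the degree function.
   Context: A graphon is a measurable symmetric function $w:[0,1]^2\to[0,1]$. It is Robinsonian if for all $x,y,z\in[0,1]$: $y<z<x\Rightarrow w(x,y)\le w(x,z)$ and $x<y<z\Rightarrow w(x,y)\ge w(x,z)$. The degree function is $d(x)=\int_0^1 w(x,y)\,dy$. The graphon-Laplacian is $(\mathbb{L}f)(x)=\int_0^1 w(x,y)(f(x)-f(y))\,dy$ on $L^2([0,1])$; its isolated eigenvalues of finite multiplicity are listed increasingly as $0=\lambda_1<\lambda_2<\cdots$, and $\lambda_2$ is the Fiedler value. Assumptions: (A1) there is $K>0$ with $|w(x,y)-w(x',y')|\le K(|x-x'|+|y-y'|)$; (A2) for every $x$, $\partial w(x,y)/\partial x$ exists and is non-zero for almost every $y$; (A3) $d'(x)$ exists for all $x\in[0,1]$ and $\{x: d'(x)=0\}$ is countable; (A4) with $\mathcal{H}=\{f\in L^2([0,1]):\int_0^1 f=0,\ \int_0^1 f^2=1\}$, $\inf_{f\in\mathcal{H}}\langle \mathbb{L}f,f\rangle<\inf_{x\in[0,1]}d(x)$. *)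

(* Defs.v *)
From HB Require Import structures.
From mathcomp Require Import all_boot all_order all_algebra.
From mathcomp Require Import all_classical all_reals all_analysis.
Set Implicit Arguments. Unset Strict Implicit. Unset Printing Implicit Defensive.
Import Order.TTheory GRing.Theory Num.Theory.
Import numFieldNormedType.Exports.
Local Open Scope classical_set_scope.
Local Open Scope ring_scope.

Section GraphonDefs.
Variable R : realType.

Definition I01 : set R := `[0, 1]%classic.

Local Notation mu := (@lebesgue_measure R).

(* one-sided-at-the-boundary derivative of f at x, relative to [0,1] *)
Definition deriv01 (f : R -> R) (x l : R) : Prop :=
  (fun t => (f t - f x) / (t - x)) @ within I01 x^' --> l.

Definition graphon (w : R -> R -> R) : Prop :=
  (forall x y, I01 x -> I01 y -> 0 <= w x y <= 1) /\
  (forall x y, I01 x -> I01 y -> w x y = w y x).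

Definition robinsonian (w : R -> R -> R) : Prop :=
  forall x y z, I01 x -> I01 y -> I01 z ->
    (y < z < x -> w x y <= w x z) /\ (x < y < z -> w x z <= w x y).

Definition degree (w : R -> R -> R) (x : R) : R :=
  Rintegral mu I01 (fun y => w x y).

Definition glap (w : R -> R -> R) (f : R -> R) (x : R) : R :=
  Rintegral mu I01 (fun y => w x y * (f x - f y)).

Definition L2 (f : R -> R) : Prop :=
  measurable_fun I01 f /\
  (\int[mu]_(x in I01) ((f x) ^+ 2)%:E < +oo)%E.

Definition aeq (f g : R -> R) : Prop :=
  mu.-negligible [set x | I01 x /\ f x <> g x].

Definition A1 (w : R -> R -> R) : Prop :=
  exists K : R, 0 < K /\ forall x y x' y', I01 x -> I01 y -> I01 x' -> I01 y' ->
    `|w x y - w x' y'| <= K * (`|x - x'| + `|y - y'|).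

Definition A2 (w : R -> R -> R) : Prop :=
  forall x, I01 x ->
    mu.-negligible [set y | I01 y /\
       ~ (exists l, deriv01 (fun t => w t y) x l /\ l <> 0)].

Definition A3 (w : R -> R -> R) : Prop :=
  exists d' : R -> R,
    (forall x, I01 x -> deriv01 (degree w) x (d' x)) /\
    countable [set x | I01 x /\ d' x = 0].

Definition Hset (f : R -> R) : Prop :=
  L2 f /\ Rintegral mu I01 f = 0 /\ Rintegral mu I01 (fun x => f x ^+ 2) = 1.

Definition qform (w : R -> R -> R) (f : R -> R) : R :=
  Rintegral mu I01 (fun x => glap w f x * f x).

(* inf_{f in H} <Lf,f> < inf_{x in [0,1]} d(x) *)
Definition A4 (w : R -> R -> R) : Prop :=
  exists f c, Hset f /\ qform w f < c /\ (forall x, I01 x -> c <= degree w x).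

(* real mu is in the resolvent set of L on L^2([0,1]) : L - mu is bijective *)
Definition resolvent (w : R -> R -> R) (m : R) : Prop :=
  (forall g, L2 g -> exists f, L2 f /\ aeq (fun x => glap w f x - m * f x) g) /\
  (forall f, L2 f -> aeq (fun x => glap w f x - m * f x) (fun=> 0) -> aeq f (fun=> 0)).

Definition eigenfun (w : R -> R -> R) (l : R) (f : R -> R) : Prop :=
  L2 f /\ aeq (glap w f) (fun x => l * f x).

(* isolated eigenvalue of finite multiplicity *)
Definition discrete_eig (w : R -> R -> R) (l : R) : Prop :=
  (exists f, eigenfun w l f /\ ~ aeq f (fun=> 0)) /\
  (exists e : R, 0 < e /\ forall m, 0 < `|m - l| < e -> resolvent w m) /\
  (exists fs : seq (R -> R), (forall i, (i < size fs)%N -> L2 (nth (fun=> 0) fs i)) /\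
     forall f, eigenfun w l f -> exists cs : seq R,
       aeq f (fun x => \sum_(i < size fs) cs`_i * nth (fun=> 0) fs i x)).

(* Fiedler value: second element of the increasing list of isolated
   eigenvalues of finite multiplicity *)
Definition fiedler (w : R -> R -> R) (l : R) : Prop :=
  discrete_eig w l /\
  exists l1, discrete_eig w l1 /\ l1 < l /\
    forall m, discrete_eig w m -> m < l -> m = l1.

End GraphonDefs.

(* Main.v *)
Require Import Defs.
From HB Require Import structures.
From mathcomp Require Import all_boot all_order all_algebra.
From mathcomp Require Import all_classical all_reals all_analysis.
From mathcomp Require Import ring lra measurable_realfun.
Import Order.TTheory GRing.Theory Num.Theory.
Import numFieldNormedType.Exports.
Set Implicit Arguments. Unset Strict Implicit. Unset Printing Implicit Defensive.
Local Open Scope classical_set_scope.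
Local Open Scope ring_scope.

Local Notation mu := (@lebesgue_measure _).

Lemma mI01 (R : realType) : measurable (@I01 R).
Proof. exact: measurable_itv. Qed.

Lemma muI01 (R : realType) : mu (@I01 R) = 1%E.
Proof. by rewrite /I01 lebesgue_measure_itv /=; rewrite lte_fin ltr01 sube0. Qed.

Lemma int_cst (R : realType) (k : R) : mu.-integrable (@I01 R) (EFin \o cst k).
Proof.
apply/integrableP; split; first exact/measurable_EFinP.
rewrite (eq_integral (cst `|k|%:E)) //.
rewrite integral_cst; last exact: measurable_itv.
set m := (X in (_ * X < _)%E). have -> : m = 1%E by exact: muI01.
by rewrite mule1 ltry.
Qed.

Lemma lip_cont (R : realType) (G : R -> R) (k : R) :
  (forall y z, `|G y - G z| <= k * `|y - z|) -> continuous G.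
Proof.
move=> HG y; apply/cvgrPdist_lt => e e0.
have k1 : 0 < `|k| + 1 by rewrite ltr_pwDr ?normr_ge0.
near=> z.
apply: (le_lt_trans (HG y z)).
apply: (le_lt_trans (y := (`|k| + 1) * `|y - z|)).
  apply: ler_wpM2r; first exact: normr_ge0. by rewrite (le_trans (ler_norm _)) // lerDl.
rewrite -ltr_pdivlMl //.
near: z; apply/nbhs_ballP; exists ((`|k|+1)^-1 * e).
  by rewrite /= mulr_gt0 ?invr_gt0.
by move=> z; rewrite /ball /= mulrC.
Unshelve. all: by end_near.
Qed.

Definition clamp (R : realType) (y : R) : R := if y < 0 then 0 else if 1 < y then 1 else y.

Lemma clamp_I01 (R : realType) (y : R) : I01 (clamp y).
Proof.
rewrite /I01 /clamp /= in_itv /=.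
case: ltP => [_|h0]; first by rewrite lexx ler01.
case: ltP => [_|h1]; first by rewrite ler01 lexx.
by rewrite h0 h1.
Qed.

Lemma clamp_id (R : realType) (y : R) : I01 y -> clamp y = y.
Proof.
rewrite /I01 /clamp /= in_itv /= => /andP[h0 h1].
by rewrite ltNge h0 /= ltNge h1.
Qed.

Lemma clamp_lip (R : realType) (y z : R) : `|clamp y - clamp z| <= `|y - z|.
Proof.
have N1 : y - z <= `|y - z| by exact: ler_norm.
have N2 : - (y - z) <= `|y - z| by rewrite -normrN; exact: ler_norm.
rewrite ler_norml /clamp.
case: ltP => h1; case: ltP => h2; try case: ltP => h3; try case: ltP => h4;
  apply/andP; split; lra.
Qed.

Lemma wx_meas (R : realType) (w : R -> R -> R) x :
  A1 w -> I01 x -> measurable_fun (@I01 R) (w x).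
Proof.
move=> [K [K0 HK]] Ix.
have cG : continuous (fun y => w x (clamp y)).
  apply: (@lip_cont _ _ K) => y z.
  apply: (le_trans (HK _ _ _ _ Ix (clamp_I01 y) Ix (clamp_I01 z))).
  rewrite subrr normr0 add0r; apply: ler_wpM2l; [exact: ltW|exact: clamp_lip].
apply: (@eq_measurable_fun _ _ _ _ _ (fun y => w x (clamp y))).
  by move=> y /set_mem Iy; rewrite clamp_id.
apply: measurable_funS (continuous_measurable_fun cG) => //.
Qed.

Lemma wx_int (R : realType) (w : R -> R -> R) x :
  graphon w -> A1 w -> I01 x -> mu.-integrable (@I01 R) (EFin \o w x).
Proof.
move=> [Hw _] HA Ix.
apply: (le_integrable _ _ _ (int_cst 1)).
- exact: measurable_itv.
- by apply/measurable_EFinP; exact: wx_meas.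
- move=> y Iy /=.
  rewrite lee_fin normr1.
  by have /andP[h0 h1] := Hw x y Ix Iy; rewrite ger0_norm.
Qed.

Lemma L2_int (R : realType) (f : R -> R) : L2 f -> mu.-integrable (@I01 R) (EFin \o f).
Proof.
move=> [mf hf].
have i2 : mu.-integrable (@I01 R) (EFin \o (fun x => f x ^+ 2)).
  apply/integrableP; split.
    by apply/measurable_EFinP; apply: measurable_funM.
  under eq_integral do rewrite /= ger0_norm ?sqr_ge0//.
  exact: hf.
apply: (le_integrable _ _ _ (integrableD _ (int_cst (1:R)) i2)).
- exact: measurable_itv.
- exact/measurable_EFinP.
2: exact: measurable_itv.
move=> y _ /=; rewrite lee_fin.
have h : `|f y| <= 1 + f y ^+ 2.
  rewrite -real_normK ?num_real //; set a := `|f y|.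
  have a0 : 0 <= a by exact: normr_ge0.
  nra.
apply: (le_trans h); exact: ler_norm.
Qed.

Lemma prod_int (R : realType) (w : R -> R -> R) x (f : R -> R) :
  graphon w -> A1 w -> I01 x -> L2 f ->
  mu.-integrable (@I01 R) (EFin \o (fun y => w x y * f y)).
Proof.
move=> [Hw _] HA Ix Lf.
apply: (le_integrable _ _ _ (L2_int Lf)).
- exact: measurable_itv.
- apply/measurable_EFinP; apply: measurable_funM; first exact: wx_meas.
  by case: Lf.
move=> y Iy /=; rewrite lee_fin normrM.
have /andP[h0 h1] := Hw x y Ix Iy.
rewrite ger0_norm //; apply: ler_piMl => //; exact: normr_ge0.
Qed.

Lemma intB (R : realType) (f g : R -> R) :
  mu.-integrable (@I01 R) (EFin \o f) -> mu.-integrable (@I01 R) (EFin \o g) ->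
  mu.-integrable (@I01 R) (EFin \o (fun y => f y - g y)).
Proof.
move=> hf hg.
apply: (eq_integrable _ _ _ _ (integrableB _ hf hg)).
- exact: measurable_itv.
- by move=> y _ /=; rewrite EFinB.
- exact: measurable_itv.
Qed.

Lemma intZr (R : realType) (f : R -> R) (k : R) :
  mu.-integrable (@I01 R) (EFin \o f) ->
  mu.-integrable (@I01 R) (EFin \o (fun y => f y * k)).
Proof.
move=> hf.
apply: (eq_integrable _ _ _ _ (integrableZr _ k hf)).
- exact: measurable_itv.
- by move=> y _ /=; rewrite EFinM.
- exact: measurable_itv.
Qed.

Definition Wop (R : realType) (w : R -> R -> R) (f : R -> R) (x : R) : R :=
  Rintegral (@lebesgue_measure R) (@I01 R) (fun y => w x y * f y).

Lemma glap_eq (R : realType) (w : R -> R -> R) (f : R -> R) x :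
  graphon w -> A1 w -> I01 x -> L2 f ->
  glap w f x = f x * degree w x - Wop w f x.
Proof.
move=> Gw HA Ix Lf.
have iw := wx_int Gw HA Ix.
rewrite /glap /Wop /degree.
under eq_Rintegral do rewrite mulrBr.
rewrite RintegralB.
- by rewrite RintegralZr ?[_ * f x]mulrC //; exact: measurable_itv.
- exact: measurable_itv.
- exact: intZr.
- exact: prod_int.
Qed.

Definition N1 (R : realType) (f : R -> R) : R :=
  Rintegral (@lebesgue_measure R) (@I01 R) (fun y => `|f y|).

Lemma W_lip (R : realType) (w : R -> R -> R) (f : R -> R) (K : R) x a :
  graphon w -> A1 w -> L2 f -> I01 x -> I01 a ->
  (forall x y x' y', I01 x -> I01 y -> I01 x' -> I01 y' ->
    `|w x y - w x' y'| <= K * (`|x - x'| + `|y - y'|)) ->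
  `|Wop w f x - Wop w f a| <= `|x - a| * K * N1 f.
Proof.
move=> Gw HA Lf Ix Ia HK.
have ix := prod_int Gw HA Ix Lf.
have ia := prod_int Gw HA Ia Lf.
have iN : mu.-integrable (@I01 R) (EFin \o (fun y => `|f y|)).
  exact: (integrable_norm (L2_int Lf)).
rewrite /Wop -RintegralB //; last exact: measurable_itv.
apply: le_trans; first apply: le_normr_Rintegral.
- exact: measurable_itv.
- exact: intB.
rewrite /N1 -RintegralZl; last 2 first.
- exact: measurable_itv.
- exact: iN.
apply: le_Rintegral.
- exact: measurable_itv.
- exact: (integrable_norm (intB ix ia)).
- apply: (eq_integrable _ _ _ _ (intZr (`|x - a| * K) iN)).
  + exact: measurable_itv.
  + by move=> y _ /=; rewrite mulrC.
move=> y Iy /=; rewrite -mulrBl normrM.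
apply: ler_wpM2r; first exact: normr_ge0.
apply: (le_trans (HK _ _ _ _ Ix Iy Ia Iy)).
by rewrite subrr normr0 addr0 mulrC.
Qed.

Lemma int_lb (R : realType) (f : R -> R) (al t B : R) (N : set R) :
  L2 f -> 0 <= B -> 0 < t -> 0 <= al -> al + t <= 1 ->
  mu.-negligible N ->
  (forall x, al <= x <= al + t -> ~ N x -> B <= f x ^+ 2) ->
  B * t <= Rintegral (@lebesgue_measure R) (@I01 R) (fun x => f x ^+ 2).
Proof.
move=> [mf hf] B0 t0 al0 alt1 hN hB.
have mf2 : measurable_fun (@I01 R) (EFin \o (fun x => f x ^+ 2)).
  by apply/measurable_EFinP; apply: measurable_funM.
pose J : set R := `[al, al + t]%classic.
have JI : J `<=` @I01 R.
  move=> x; rewrite /J /I01 /= !in_itv /= => /andP[h1 h2].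
  apply/andP; split; lra.
have h1 : ((B * t)%:E <= \int[mu]_(x in J) (f x ^+ 2)%:E)%E.
  have -> : (B * t)%:E = (\int[mu]_(x in J) (cst B%:E) x)%E.
    rewrite integral_cst; last exact: measurable_itv.
    have mJ : mu J = t%:E.
      rewrite /J lebesgue_measure_itv /= lte_fin ltrDl t0 /= -EFinD.
      by rewrite addrAC subrr add0r.
    set m := (X in (_ * X)%E); have -> : m = t%:E by exact: mJ.
    by rewrite -EFinM.
  apply: ae_ge0_le_integral.
  - exact: measurable_itv.
  - by move=> x _; rewrite lee_fin.
  - exact: measurable_cst.
  - by move=> x _; rewrite lee_fin sqr_ge0.
  - apply: measurable_funS mf2 => //; exact: measurable_itv.
  - move: hN => [A [mA A0 NA]]; exists A; split => //.
    move=> x /= hx; apply: NA; apply: contrapT => Nx; apply: hx => /= Jx.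
    rewrite lee_fin; apply: hB => //.
have h2 : (\int[mu]_(x in J) (f x ^+ 2)%:E <=
           \int[mu]_(x in @I01 R) (f x ^+ 2)%:E)%E.
  apply: ge0_subset_integral => //.
  - exact: measurable_itv.
  - exact: measurable_itv.
  - by move=> x _; rewrite lee_fin sqr_ge0.
have h3 := le_trans h1 h2.
rewrite /Rintegral -lee_fin fineK //.
rewrite ge0_fin_numE; first exact: hf.
by apply: integral_ge0 => x _; rewrite lee_fin sqr_ge0.
Qed.

Lemma L2_one (R : realType) : L2 (fun _ : R => 1).
Proof.
split; first exact: measurable_cst.
under eq_integral do rewrite expr1n.
rewrite integral_cst; last exact: measurable_itv.
set m := (X in (_ * X < _)%E). have -> : m = 1%E by exact: muI01.
by rewrite mule1 ltry.
Qed.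

Lemma degree_W (R : realType) (w : R -> R -> R) x :
  degree w x = Wop w (fun _ => 1) x.
Proof. by rewrite /degree /Wop; under [RHS]eq_Rintegral do rewrite mulr1. Qed.

Lemma N1_ge0 (R : realType) (f : R -> R) : 0 <= N1 f.
Proof. by apply: Rintegral_ge0 => x _; exact: normr_ge0. Qed.

Definition stepf (R : realType) (a : R) (x : R) : R := if a < x then 1 else 0.

Lemma L2_step (R : realType) (a : R) : L2 (stepf a).
Proof.
have mg : measurable_fun (@I01 R) (stepf a).
  apply: (@eq_measurable_fun _ _ _ _ _ (\1_(`]a, +oo[%classic) : R -> R)).
    move=> x _; rewrite /stepf indicE; case: ltP => h.
      by rewrite mem_set //= in_itv /= h.
    by rewrite memNset //= in_itv /= andbT ltNge h.
  exact: (measurable_indic (measurable_itv _)).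
split => //.
apply: (@le_lt_trans _ _ (\int[mu]_(x in @I01 R) (cst 1%:E) x)%E).
  apply: ge0_le_integral.
  - exact: measurable_itv.
  - by move=> x _; rewrite lee_fin sqr_ge0.
  - by apply/measurable_EFinP; apply: measurable_funM.
  - exact: measurable_cst.
  - by move=> x _; rewrite lee_fin /stepf; case: ltP => _; rewrite ?expr1n ?expr0n.
rewrite integral_cst; last exact: measurable_itv.
set m := (X in (_ * X < _)%E). have -> : m = 1%E by exact: muI01.
by rewrite mule1 ltry.
Qed.

Lemma arith1 (R : realType) (u e q : R) :
  0 < q -> `|e| <= q -> 1/4 <= `|u * e| -> 1 / (16 * q ^+ 2) <= u ^+ 2.
Proof.
move=> q0 eq hu.
have q2 : 0 < 16 * q ^+ 2 by rewrite mulr_gt0 // exprn_gt0.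
rewrite ler_pdivrMr // -real_normK ?num_real //.
rewrite normrM in hu.
have U0 := normr_ge0 u; have V0 := normr_ge0 e.
set U := `|u| in hu U0 *; set V := `|e| in hu eq V0.
have h1 : 1/4 <= U * q by apply: (le_trans hu); apply: ler_wpM2l.
nra.
Qed.

Lemma tri2 (R : realType) (p r : R) : `|p| - `|r - p| <= `|r|.
Proof.
have := ler_normB r (r - p); rewrite opprB addrC subrK.
move=> h; lra.
Qed.

Lemma not_res (R : realType) (w : R -> R -> R) (a : R) :
  graphon w -> A1 w -> 0 < a < 1 -> ~ resolvent w (degree w a).
Proof.
move=> Gw HA /andP[a0 a1] [Hsurj _].
have Ia : I01 a by rewrite /I01 /= in_itv /= !ltW.
have [f [Lf hN]] := Hsurj _ (L2_step a).
have HA' := HA; case: HA' => K [K0 HK].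
set m := degree w a.
set S := Rintegral (@lebesgue_measure R) (@I01 R) (fun x => f x ^+ 2).
have S0 : 0 <= S by apply: Rintegral_ge0 => x _; exact: sqr_ge0.
set c := Wop w f a.
have hN1f := N1_ge0 f; have hN11 := N1_ge0 (fun _ : R => 1).
set M := K * N1 f + 1.
set Dc := K * N1 (fun _ : R => 1) + 1.
have M0 : 0 < M by rewrite /M; nra.
have Dc0 : 0 < Dc by rewrite /Dc; nra.
have hW : forall x, I01 x -> `|Wop w f x - c| <= `|x - a| * M.
  move=> x Ix; apply: (le_trans (W_lip Gw HA Lf Ix Ia HK)).
  rewrite -mulrA; apply: ler_wpM2l; first exact: normr_ge0.
  by rewrite /M lerDl.
have hD : forall x, I01 x -> `|degree w x - m| <= `|x - a| * Dc.
  move=> x Ix; rewrite /m !degree_W.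
  apply: (le_trans (W_lip Gw HA (@L2_one R) Ix Ia HK)).
  rewrite -mulrA; apply: ler_wpM2l; first exact: normr_ge0.
  by rewrite /Dc lerDl.
set Nset := [set x | I01 x /\ glap w f x - m * f x <> stepf a x].
have heq : forall x, I01 x -> ~ Nset x ->
    f x * (degree w x - m) = stepf a x + Wop w f x.
  move=> x Ix hx.
  have e : glap w f x - m * f x = stepf a x.
    by apply: contrapT => hne; apply: hx.
  move: e; rewrite glap_eq // => <-; ring.
have hcore : forall al t, 0 < t -> 0 <= al -> al + t <= 1 ->
    (forall x, al <= x <= al + t -> `|x - a| <= 2 * t) ->
    (forall x, al <= x <= al + t -> 1/4 <= `|stepf a x + Wop w f x|) ->
    1 / (16 * (2 * t * Dc) ^+ 2) * t <= S.
  move=> al t t0 al0 alt hx hs.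
  apply: (int_lb Lf _ t0 al0 alt hN).
    by rewrite divr_ge0 // mulr_ge0 // sqr_ge0.
  move=> x hxJ Nx.
  have Ix : I01 x.
    move: hxJ => /andP[h1 h2]; rewrite /I01 /= in_itv /=; apply/andP; split; lra.
  apply: (arith1 (e := degree w x - m)).
  - by rewrite !mulr_gt0.
  - apply: (le_trans (hD x Ix)).
    rewrite [2 * t * Dc]mulrC [Dc * _]mulrC; apply: ler_wpM2r; first exact: ltW.
    exact: hx.
  - by rewrite heq //; exact: hs.
pose t := Num.min (Num.min ((1 - a) / 2) (a / 2))
                  (Num.min (1 / (8 * M)) (1 / (128 * Dc ^+ 2 * (S + 1)))).
have t0 : 0 < t.
  rewrite !lt_min !divr_gt0 ?mulr_gt0 ?exprn_gt0 //; lra.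
have t1 : t <= (1 - a) / 2 by rewrite !ge_min lexx.
have t2 : t <= a / 2 by rewrite !ge_min lexx orbT.
have t3 : t <= 1 / (8 * M) by rewrite !ge_min lexx !orbT.
have t4 : t <= 1 / (128 * Dc ^+ 2 * (S + 1)) by rewrite !ge_min lexx !orbT.
have tM : 2 * t * M <= 1/4.
  move: t3; rewrite ler_pdivlMr ?mulr_gt0 // => h; nra.
have tri : 1 <= `|1 + c| + `|c|.
  by have := ler_normB (1 + c) c; rewrite addrK normr1.
have final : 1 / (16 * (2 * t * Dc) ^+ 2) * t <= S -> False.
  move=> h.
  have P0 : 0 < t * Dc ^+ 2 by rewrite mulr_gt0 // exprn_gt0.
  have e1 : 1 / (16 * (2 * t * Dc) ^+ 2) * t = 1 / (64 * (t * Dc ^+ 2)).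
    by field; apply/andP; split; rewrite gt_eqF.
  rewrite e1 ler_pdivrMr ?mulr_gt0 // in h.
  move: t4; rewrite ler_pdivlMr ?mulr_gt0 ?exprn_gt0 //; last lra.
  have -> : t * (128 * Dc ^+ 2 * (S + 1)) = 128 * (t * Dc ^+ 2) * (S + 1) by ring.
  move=> h4; set P := t * Dc ^+ 2 in h P0 e1 h4; nra.
have [hc|hc] : 1/2 <= `|1 + c| \/ 1/2 <= `|c|.
  by case: (lerP (1/2) `|1 + c|) => h; [left | right; lra].
- apply: final; apply: (hcore (a + t) t t0); [lra|lra| | ].
  + by move=> x /andP[h1 h2]; rewrite ger0_norm; lra.
  + move=> x /andP[h1 h2].
    have Ix : I01 x by rewrite /I01 /= in_itv /=; apply/andP; split; lra.
    have sx : stepf a x = 1 by rewrite /stepf; case: ltP => h; lra.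
    have ha : `|x - a| <= 2 * t by rewrite ger0_norm; lra.
    have hb := hW x Ix.
    have hb2 : `|x - a| * M <= 2 * t * M by apply: ler_wpM2r => //; exact: ltW.
    have := tri2 (1 + c) (1 + Wop w f x).
    have -> : 1 + Wop w f x - (1 + c) = Wop w f x - c by ring.
    rewrite sx => h3; lra.
- apply: final; apply: (hcore (a - 2 * t) t t0); [lra|lra| | ].
  + by move=> x /andP[h1 h2]; rewrite ler0_norm; lra.
  + move=> x /andP[h1 h2].
    have Ix : I01 x by rewrite /I01 /= in_itv /=; apply/andP; split; lra.
    have sx : stepf a x = 0 by rewrite /stepf; case: ltP => h; lra.
    have ha : `|x - a| <= 2 * t by rewrite ler0_norm; lra.
    have hb := hW x Ix.
    have hb2 : `|x - a| * M <= 2 * t * M by apply: ler_wpM2r => //; exact: ltW.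
    have := tri2 c (Wop w f x).
    rewrite sx add0r => h3; lra.
Qed.

Lemma deriv_zero (R : realType) (g : R -> R) (u v y l : R) :
  0 <= u -> u < y -> y < v -> v <= 1 ->
  (forall z, u < z < v -> g z = g y) -> deriv01 g y l -> l = 0.
Proof.
move=> u0 uy yv v1 hc hd.
apply: contrapT => l0.
have hl : 0 < `|l| by rewrite normr_gt0; apply/eqP.
have := (cvgrPdist_lt _ _).1 hd _ hl.
rewrite near_withinE /= near_withinE /=.
move=> /(_ (within_filter _ _)) /nbhs_ballP [del del0 Hdel].
have d0 : 0 < del by exact: del0.
pose s := Num.min (del / 2) ((v - y) / 2).
have s0 : 0 < s by rewrite lt_min !divr_gt0 //; lra.
have s1 : s <= del / 2 by rewrite ge_min lexx.
have s2 : s <= (v - y) / 2 by rewrite ge_min lexx orbT.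
have := Hdel (y + s).
have hb : ball y del (y + s).
  by rewrite /ball /= opprD addNKr normrN ger0_norm; lra.
have hne : y + s != y by rewrite -subr_eq0 addrAC subrr add0r gt_eqF.
have hI : I01 (y + s) by rewrite /I01 /= in_itv /=; apply/andP; split; lra.
move=> /(_ hb hne hI).
rewrite hc; last by apply/andP; split; lra.
by rewrite subrr mul0r subr0 ltxx.
Qed.

Lemma const_contra (R : realType) (w : R -> R -> R) (u v l : R) :
  0 <= u -> u < v -> v <= 1 -> A3 w ->
  (forall z, u < z < v -> degree w z = l) -> False.
Proof.
move=> u0 uv v1 [d' [hder hcnt]] hc.
have sub : `]u, v[%classic `<=` [set x | I01 x /\ d' x = 0].
  move=> y; rewrite /= in_itv /= => /andP[h1 h2].
  have Iy : I01 y by rewrite /I01 /= in_itv /=; apply/andP; split; lra.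
  split => //.
  apply: (deriv_zero u0 h1 h2 v1 _ (hder y Iy)).
  by move=> z hz; rewrite !hc //; apply/andP; split.
have cnt : countable `]u, v[%classic := sub_countable (subset_card_le sub) hcnt.
have := countable_lebesgue_measure0 cnt.
rewrite lebesgue_measure_itv /= lte_fin uv -EFinB => -[] /eqP.
by rewrite subr_eq0 gt_eqF.
Qed.

Unset Implicit Arguments. Set Strict Implicit.

Theorem mainTheorem6 (R : realType) (w : R -> R -> R) :
  graphon w -> robinsonian w -> A1 w -> A2 w -> A3 w -> A4 w ->
  forall l : R, fiedler w l -> ~ (exists x, I01 x /\ degree w x = l).
Proof.
move=> Gw Rob HA HA2 HA3 HA4 l [[_ [[e [e0 He]] _]] _] [x0 [Ix0 dx0]].
have HA' := HA; case: HA' => K [K0 HK].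
have hN11 := N1_ge0 (fun _ : R => 1).
set Dc := K * N1 (fun _ : R => 1) + 1.
have Dc0 : 0 < Dc by rewrite /Dc; nra.
have hD : forall x, I01 x -> `|degree w x - l| <= `|x - x0| * Dc.
  move=> x Ix; rewrite -dx0 !degree_W.
  apply: (le_trans (W_lip Gw HA (@L2_one R) Ix Ix0 HK)).
  rewrite -mulrA; apply: ler_wpM2l; first exact: normr_ge0.
  by rewrite /Dc lerDl.
pose r := e / (2 * Dc).
have r0 : 0 < r by rewrite divr_gt0 // mulr_gt0.
pose s := Num.min r (1/2).
have s0 : 0 < s by rewrite lt_min r0 /=; lra.
have s1 : s <= r by rewrite ge_min lexx.
have s2 : s <= 1/2 by rewrite ge_min lexx orbT.
have hx0 : 0 <= x0 <= 1 by move: Ix0; rewrite /I01 /= in_itv.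
move/andP: hx0 => [x00 x01].
have [u [v [u0 [uv [v1 huv]]]]] : exists u v, 0 <= u /\ u < v /\ v <= 1 /\
    forall y, u < y < v -> `|y - x0| <= s.
  case: (lerP x0 (1/2)) => h.
    exists x0, (x0 + s); do 3 (split; first lra).
    move=> y /andP[h1 h2]; rewrite ger0_norm; lra.
  exists (x0 - s), x0; do 3 (split; first lra).
  move=> y /andP[h1 h2]; rewrite ler0_norm; lra.
have [z [hz hne]] : exists z, u < z < v /\ degree w z <> l.
  apply: contrapT => H; apply: (@const_contra R w u v l u0 uv v1 HA3) => z hz.
  by apply: contrapT => hne; apply: H; exists z; split.
move/andP: (hz) => [hz1 hz2].
have Iz : I01 z by rewrite /I01 /= in_itv /=; apply/andP; split; lra.
apply: (@not_res R w z Gw HA); first by apply/andP; split; lra.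
apply: He; apply/andP; split.
  by rewrite normr_gt0 subr_eq0; apply/eqP.
apply: (le_lt_trans (hD z Iz)).
have h1 : `|z - x0| * Dc <= s * Dc by apply: ler_wpM2r; [exact: ltW | exact: huv].
have h2 : s * Dc <= r * Dc by apply: ler_wpM2r; [exact: ltW | exact: s1].
have h3 : r * Dc = e / 2 by rewrite /r; field; rewrite gt_eqF.
lra.
Qed.
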